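(* The labelled transition system of CPC is structurally image finite: for every CPC process $P$ and every label $\mu$, the set $\{P' : P\xrightarrow{\mu}P'\}$ contains only finitely many equivalence classes with respect to structural congruence $\equiv$.
   Context: Concurrent pattern calculus (CPC). Fix a countable set $\mathcal N$ of names. Patterns are $p ::= \lambda x \mid x \mid \ulcorner x\urcorner \mid p\bullet p$ (binding name, variable name, protected name, compound; $\bullet$ is left associative). ${\sf bn}(p)$, ${\sf vn}(p)$, ${\sf pn}(p)$ denote the sets of names occurring in $p$ as binding, variable and protected names, and ${\sf fn}(p)={\sf vn}(p)\cup{\sf pn}(p)$. A pattern is well formed if its binding names are pairwise distinct and distinct from its free names; all patterns are assumed well formed. A pattern is communicable if it contains no protected and no binding names; protection extends to communicable patterns by $\ulcorner p\bullet q\urcorner=\ulcorner p\urcorner\bullet\ulcorner q\urcorner$. A substitution is a partial function with finite domain from names to communicable patterns. On patterns: $\sigma x=\sigma(x)$ if $x\in{\sf dom}(\sigma)$ else $x$; $\sigma\ulcorner x\urcorner=\ulcorner\sigma(x)\urcorner$ if $x\in{\sf dom}(\sigma)$ else $\ulcorner x\urcorner$; $\sigma(\lambda x)=\lambda x$; $\sigma(p\bullet q)=\sigma p\bullet\sigma q$. Unification $\{p\,\|\,q\}$ is a pair of substitutions or undefined: $\{x\|x\}=\{x\|\ulcorner x\urcorner\}=\{\ulcorner x\urcorner\|x\}=\{\ulcorner x\urcorner\|\ulcorner x\urcorner\}=(\{\},\{\})$; $\{\lambda x\|q\}=(\{q/x\},\{\})$ if $q$ is communicable; $\{p\|\lambda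 x\}=(\{\},\{p/x\})$ if $p$ is communicable; $\{p_1\bullet p_2\|q_1\bullet q_2\}=(\sigma_1\cup\sigma_2,\rho_1\cup\rho_2)$ if $\{p_i\|q_i\}=(\sigma_i,\rho_i)$ for $i=1,2$; undefined otherwise. Processes: $P ::= 0 \mid P|P \mid\ !P \mid (\nu x)P \mid p\to P$ (the binding names of $p$ bind in $P$; ${\sf fn}(p\to P)={\sf fn}(p)\cup({\sf fn}(P)\setminus{\sf bn}(p))$; other free names as usual). Substitution on processes is capture avoiding (up to $\alpha$-conversion). Structural congruence $\equiv$ is the least congruence containing $\alpha$-conversion and $P|0\equiv P$, $P|Q\equiv Q|P$, $P|(Q|R)\equiv(P|Q)|R$, $(\nu n)0\equiv 0$, $(\nu n)(\nu m)P\equiv(\nu m)(\nu n)P$, $!P\equiv P|!P$, $P|(\nu n)Q\equiv(\nu n)(P|Q)$ if $n\notin{\sf fn}(P)$. Labelled transitions: labels $\mu::=\tau\mid(\nu\tilde n)p$. Rules (up to $\alpha$-conversion; parint and parext also have symmetric versions): case: $p\to P\xrightarrow{p}P$; resnon: $P\xrightarrow{\mu}P'$ implies $(\nu n)P\xrightarrow{\mu}(\nu n)P'$ if $n$ does not occur in $\mu$; open: $P\xrightarrow{(\nu\tilde n)p}P'$ implies $(\nu m)P\xrightarrow{(\nu\tilde n,m)p}P'$ if $m\in{\sf vn}(p)\setminus(\tilde n\cup{\sf pn}(p)\cup{\sf bn}(p))$; unify: $P\xrightarrow{(\nu\tilde m)p}P'$ and $Q\xrightarrow{(\nu\tilde n)q}Q'$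 imply $P|Q\xrightarrow{\tau}(\nu\tilde m\tilde n)(\sigma P'|\rho Q')$ if $\{p\|q\}=(\sigma,\rho)$, $\tilde m\cap{\sf fn}(Q)=\tilde n\cap{\sf fn}(P)=\tilde m\cap\tilde n=\emptyset$; parint: $P\xrightarrow{\tau}P'$ implies $P|Q\xrightarrow{\tau}P'|Q$; parext: $P\xrightarrow{(\nu\tilde n)p}P'$ implies $P|Q\xrightarrow{(\nu\tilde n)p}P'|Q$ if $(\tilde n\cup{\sf bn}(p))\cap{\sf fn}(Q)=\emptyset$; rep: $!P|P\xrightarrow{\mu}P'$ implies $!P\xrightarrow{\mu}P'$. *)

(* Defs.v *)
From mathcomp Require Import all_boot.
Set Implicit Arguments.
Unset Strict Implicit.
Unset Printing Implicit Defensive.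

Definition name := nat.

(* Patterns p ::= \x | x | 'x' | p . p *)
Inductive pat : Type :=
  | PBind of name
  | PVar of name
  | PProt of name
  | PComp of pat & pat.

Fixpoint bn (p : pat) : seq name :=
  match p with PBind x => [:: x] | PComp a b => bn a ++ bn b | _ => [::] end.
Fixpoint vn (p : pat) : seq name :=
  match p with PVar x => [:: x] | PComp a b => vn a ++ vn b | _ => [::] end.
Fixpoint pn (p : pat) : seq name :=
  match p with PProt x => [:: x] | PComp a b => pn a ++ pn b | _ => [::] end.
Definition fnp (p : pat) : seq name := vn p ++ pn p.
Definition pnames (p : pat) : seq name := bn p ++ fnp p.

Definition wf_pat (p : pat) : bool :=
  uniq (bn p) && all (fun x => x \notin fnp p) (bn p).

Definition communicable (p : pat) : bool := (bn p == [::]) && (pn p == [::]).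

Fixpoint protect (p : pat) : pat :=
  match p with PVar x => PProt x | PComp a b => PComp (protect a) (protect b) | _ => p end.

(* Substitutions: finite partial maps from names to (communicable) patterns,
   represented as association lists (first binding wins). *)
Definition subst := seq (name * pat).

Fixpoint lookup (s : subst) (x : name) : option pat :=
  match s with
  | [::] => None
  | (y, t) :: s' => if x == y then Some t else lookup s' x
  end.

Fixpoint subst_pat (s : subst) (p : pat) : pat :=
  match p with
  | PVar x => if lookup s x is Some t then t else PVar x
  | PProt x => if lookup s x is Some t then protect t else PProt x
  | PBind x => PBind x
  | PComp a b => PComp (subst_pat s a) (subst_pat s b)
  end.

Fixpoint unify (p q : pat) : option (subst * subst) :=
  match p, q with
  | PBind x, _ => if communicable q then Some ([:: (x, q)], [::]) else None
  | _, PBind y => if communicable p then Some ([::], [:: (y, p)]) else None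
  | PComp p1 p2, PComp q1 q2 =>
      match unify p1 q1, unify p2 q2 with
      | Some (s1, r1), Some (s2, r2) => Some (s1 ++ s2, r1 ++ r2)
      | _, _ => None
      end
  | (PVar x | PProt x), (PVar y | PProt y) =>
      if x == y then Some ([::], [::]) else None
  | _, _ => None
  end.

Inductive proc : Type :=
  | Nil
  | Par of proc & proc
  | Rep of proc
  | Res of name & proc
  | Case of pat & proc.

Fixpoint fn (P : proc) : seq name :=
  match P with
  | Nil => [::]
  | Par P Q => fn P ++ fn Q
  | Rep P => fn P
  | Res x P => [seq y <- fn P | y != x]
  | Case p P => fnp p ++ [seq y <- fn P | y \notin bn p]
  end.

Fixpoint bnames (P : proc) : seq name :=
  match P with
  | Nil => [::]
  | Par P Q => bnames P ++ bnames Q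
  | Rep P => bnames P
  | Res x P => x :: bnames P
  | Case p P => bn p ++ bnames P
  end.

Fixpoint wf_proc (P : proc) : bool :=
  match P with
  | Nil => true
  | Par P Q => wf_proc P && wf_proc Q
  | Rep P => wf_proc P
  | Res _ P => wf_proc P
  | Case p P => wf_pat p && wf_proc P
  end.

Definition swap_name (x y n : name) : name :=
  if n == x then y else if n == y then x else n.

Fixpoint swap_pat (x y : name) (p : pat) : pat :=
  match p with
  | PBind n => PBind (swap_name x y n)
  | PVar n => PVar (swap_name x y n)
  | PProt n => PProt (swap_name x y n)
  | PComp a b => PComp (swap_pat x y a) (swap_pat x y b)
  end.

Fixpoint swap_proc (x y : name) (P : proc) : proc :=
  match P with
  | Nil => Nil
  | Par P Q => Par (swap_proc x y P) (swap_proc x y Q)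
  | Rep P => Rep (swap_proc x y P)
  | Res n P => Res (swap_name x y n) (swap_proc x y P)
  | Case p P => Case (swap_pat x y p) (swap_proc x y P)
  end.

Inductive alpha : proc -> proc -> Prop :=
  | a_refl P : alpha P P
  | a_sym P Q : alpha P Q -> alpha Q P
  | a_trans P Q R : alpha P Q -> alpha Q R -> alpha P R
  | a_par P P' Q Q' : alpha P P' -> alpha Q Q' -> alpha (Par P Q) (Par P' Q')
  | a_rep P P' : alpha P P' -> alpha (Rep P) (Rep P')
  | a_res x P P' : alpha P P' -> alpha (Res x P) (Res x P')
  | a_case p P P' : alpha P P' -> alpha (Case p P) (Case p P')
  | a_res_ren x y P : y \notin fn (Res x P) ->
      alpha (Res x P) (Res y (swap_proc x y P))
  | a_case_ren p P x y : x \in bn p -> x \notin fnp p -> y \notin fn (Case p P) ->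
      alpha (Case p P) (Case (swap_pat x y p) (swap_proc x y P)).

Inductive scong : proc -> proc -> Prop :=
  | s_refl P : scong P P
  | s_sym P Q : scong P Q -> scong Q P
  | s_trans P Q R : scong P Q -> scong Q R -> scong P R
  | s_par P P' Q Q' : scong P P' -> scong Q Q' -> scong (Par P Q) (Par P' Q')
  | s_rep P P' : scong P P' -> scong (Rep P) (Rep P')
  | s_res x P P' : scong P P' -> scong (Res x P) (Res x P')
  | s_case p P P' : scong P P' -> scong (Case p P) (Case p P')
  | s_alpha P Q : alpha P Q -> scong P Q
  | s_par0 P : scong (Par P Nil) P
  | s_parC P Q : scong (Par P Q) (Par Q P)
  | s_parA P Q R : scong (Par P (Par Q R)) (Par (Par P Q) R)
  | s_res0 n : scong (Res n Nil) Nil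
  | s_resC n m P : scong (Res n (Res m P)) (Res m (Res n P))
  | s_repU P : scong (Rep P) (Par P (Rep P))
  | s_extr P n Q : n \notin fn P -> scong (Par P (Res n Q)) (Res n (Par P Q)).

(* Naive substitution on processes (bound names are removed from the
   substitution's domain); it is capture avoiding under [safe]. *)
Definition remove_dom (s : subst) (xs : seq name) : subst :=
  [seq e <- s | e.1 \notin xs].

Fixpoint psubst (s : subst) (P : proc) : proc :=
  match P with
  | Nil => Nil
  | Par P Q => Par (psubst s P) (psubst s Q)
  | Rep P => Rep (psubst s P)
  | Res x P => Res x (psubst (remove_dom s [:: x]) P)
  | Case p P => Case (subst_pat s p) (psubst (remove_dom s (bn p)) P)
  end.

Definition safe (s : subst) (P : proc) : bool :=
  all (fun b => all (fun e => b \notin pnames e.2) s) (bnames P).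

Definition disj (a b : seq name) : bool := all (fun x => x \notin b) a.

Definition res_seq (ns : seq name) (P : proc) : proc := foldr Res P ns.

Inductive label : Type :=
  | Tau
  | Out of seq name & pat.

Definition label_names (mu : label) : seq name :=
  match mu with Tau => [::] | Out ns p => ns ++ pnames p end.

(* Capture
   avoiding substitution sigma P' in rule unify is realised as the naive
   substitution on a suitable alpha-variant of P' (choosable via t_alpha). *)
Inductive trans : proc -> label -> proc -> Prop :=
  | t_alpha P P0 mu P1 P2 :
      alpha P P0 -> trans P0 mu P1 -> alpha P1 P2 -> trans P mu P2
  | t_case p P : trans (Case p P) (Out [::] p) P
  | t_resnon n P mu P' :
      trans P mu P' -> n \notin label_names mu -> trans (Res n P) mu (Res n P')
  | t_open m P ns p P' :
      trans P (Out ns p) P' ->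
      m \in vn p -> m \notin ns -> m \notin pn p -> m \notin bn p ->
      trans (Res m P) (Out (rcons ns m) p) P'
  | t_unify P Q ms ns p q P' Q' s r :
      trans P (Out ms p) P' -> trans Q (Out ns q) Q' ->
      unify p q = Some (s, r) ->
      disj ms (fn Q) -> disj ns (fn P) -> disj ms ns ->
      safe s P' -> safe r Q' ->
      trans (Par P Q) Tau (res_seq (ms ++ ns) (Par (psubst s P') (psubst r Q')))
  | t_parint_l P Q P' : trans P Tau P' -> trans (Par P Q) Tau (Par P' Q)
  | t_parint_r P Q Q' : trans Q Tau Q' -> trans (Par P Q) Tau (Par P Q')
  | t_parext_l P Q ns p P' :
      trans P (Out ns p) P' -> disj (ns ++ bn p) (fn Q) ->
      trans (Par P Q) (Out ns p) (Par P' Q)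
  | t_parext_r P Q ns p Q' :
      trans Q (Out ns p) Q' -> disj (ns ++ bn p) (fn P) ->
      trans (Par P Q) (Out ns p) (Par P Q')
  | t_rep P mu P' : trans (Par (Rep P) P) mu P' -> trans (Rep P) mu P'.

(* Main.v *)
From HB Require Import structures.
Require Import Defs.
From Stdlib Require Import List.
From mathcomp Require Import all_boot zify.
Set Implicit Arguments.
Unset Strict Implicit.
Unset Printing Implicit Defensive.

Fixpoint pat_eqb (p q : pat) : bool :=
  match p, q with
  | PBind x, PBind y => Nat.eqb x y
  | PVar x, PVar y => Nat.eqb x y
  | PProt x, PProt y => Nat.eqb x y
  | PComp a b, PComp c d => pat_eqb a c && pat_eqb b d
  | _, _ => false end.
Lemma pat_eqP : Equality.axiom pat_eqb.
Proof.
move=> p q; apply: (iffP idP).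
  elim: p q => [x|x|x|a iha b ihb] [y|y|y|c d] //=; try by move/PeanoNat.Nat.eqb_eq ->.
  by case h1: pat_eqb => //= h2; rewrite (iha _ h1) (ihb _ h2).
move=> ->; elim: q => [x|x|x|a iha b ihb] /=; rewrite ?PeanoNat.Nat.eqb_refl //.
by rewrite iha ihb.
Qed.
HB.instance Definition _ := hasDecEq.Build pat pat_eqP.

Fixpoint size_pat (p : pat) : nat :=
  match p with PComp a b => (size_pat a + size_pat b).+1 | _ => 1 end.
Fixpoint psize (P : proc) : nat :=
  match P with
  | Defs.Nil => 1 | Par a b => (psize a + psize b).+1 | Rep a => (psize a).+1
  | Res _ a => (psize a).+1 | Case p a => (size_pat p + psize a).+1 end.
Fixpoint erase_pat (p : pat) : pat :=
  match p with PBind _ => PBind 0 | PVar _ => PVar 0 | PProt _ => PProt 0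
  | PComp a b => PComp (erase_pat a) (erase_pat b) end.
Fixpoint erase (P : proc) : proc :=
  match P with
  | Defs.Nil => Defs.Nil | Par a b => Par (erase a) (erase b) | Rep a => Rep (erase a)
  | Res _ a => Res 0 (erase a) | Case p a => Case (erase_pat p) (erase a) end.
Fixpoint maxpat (P : proc) : nat :=
  match P with
  | Defs.Nil => 0 | Par a b => maxn (maxpat a) (maxpat b) | Rep a => maxpat a
  | Res _ a => maxpat a | Case p a => maxn (size_pat p) (maxpat a) end.
Fixpoint nres (P : proc) : nat :=
  match P with
  | Defs.Nil => 0 | Par a b => maxn (nres a) (nres b) | Rep a => nres a
  | Res _ a => (nres a).+1 | Case p a => nres a end.

Lemma size_pat_erase p : size_pat (erase_pat p) = size_pat p.
Proof. by elim: p => //= a -> b ->. Qed.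
Lemma psize_erase P : psize (erase P) = psize P.
Proof. by elim: P => /= [|a IHa b IHb|a IHa|n a IHa|p a IHa]; rewrite ?IHa ?IHb ?size_pat_erase. Qed.
Lemma maxpat_erase P : maxpat (erase P) = maxpat P.
Proof. by elim: P => /= [|a IHa b IHb|a IHa|n a IHa|p a IHa]; rewrite ?IHa ?IHb ?size_pat_erase. Qed.
Lemma nres_erase P : nres (erase P) = nres P.
Proof. by elim: P => /= [|a IHa b IHb|a IHa|n a IHa|p a IHa]; rewrite ?IHa ?IHb. Qed.

Notation sw := swap_name.
Lemma swK x y : involutive (sw x y).
Proof. move=> n; rewrite /swap_name; case: (eqVneq n x) => [->|nx].
  by rewrite eqxx; case: (eqVneq y x) => [->|]; rewrite ?eqxx.
case: (eqVneq n y) => [->|ny]; first by rewrite eqxx.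
by rewrite (negbTE nx) (negbTE ny).
Qed.
Lemma sw_inj x y : injective (sw x y).
Proof. exact: inv_inj (swK x y). Qed.
Lemma sw_comm (f : name -> name) x y n : injective f ->
  sw (f x) (f y) (f n) = f (sw x y n).
Proof. by move=> fi; rewrite /swap_name !(inj_eq fi); case: ifP => //; case: ifP. Qed.
Lemma swapl x y : sw x y x = y. Proof. by rewrite /swap_name eqxx. Qed.
Lemma swapr x y : sw x y y = x.
Proof. by rewrite /swap_name eqxx; case: eqP. Qed.
Lemma swap_other x y n : n != x -> n != y -> sw x y n = n.
Proof. by rewrite /swap_name => /negbTE -> /negbTE ->. Qed.

Lemma swap_patK x y : involutive (swap_pat x y).
Proof. by elim => /= [n|n|n|a -> b ->]; rewrite ?swK. Qed.
Lemma swap_procK x y : involutive (swap_proc x y).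
Proof. by elim => //= [a -> b ->|a ->|n a ->|p a ->]; rewrite ?swK ?swap_patK. Qed.

Lemma bn_swap x y p : bn (swap_pat x y p) = map (sw x y) (bn p).
Proof. by elim: p => //= a -> b ->; rewrite map_cat. Qed.
Lemma vn_swap x y p : vn (swap_pat x y p) = map (sw x y) (vn p).
Proof. by elim: p => //= a -> b ->; rewrite map_cat. Qed.
Lemma pn_swap x y p : pn (swap_pat x y p) = map (sw x y) (pn p).
Proof. by elim: p => //= a -> b ->; rewrite map_cat. Qed.
Lemma fnp_swap x y p : fnp (swap_pat x y p) = map (sw x y) (fnp p).
Proof. by rewrite /fnp vn_swap pn_swap map_cat. Qed.
Lemma pnames_swap x y p : pnames (swap_pat x y p) = map (sw x y) (pnames p).
Proof. by rewrite /pnames bn_swap fnp_swap map_cat. Qed.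
Lemma bnames_swap x y P : bnames (swap_proc x y P) = map (sw x y) (bnames P).
Proof. by elim: P => //= [a -> b ->|n a ->|p a ->]; rewrite ?map_cat ?bn_swap. Qed.
Lemma fn_swap x y P : fn (swap_proc x y P) = map (sw x y) (fn P).
Proof.
elim: P => /= [|a IHa b IHb|a IHa|n a IHa|p a IHa]; rewrite ?IHa ?IHb ?map_cat //.
  rewrite filter_map; congr (map _ _); apply: eq_filter => z /=.
  by rewrite (inj_eq (@sw_inj _ _)).
rewrite fnp_swap filter_map bn_swap; congr (_ ++ _); first by rewrite /fnp map_cat.
congr (map _ _); apply: eq_filter => z /=.
by rewrite mem_map //; exact: sw_inj.
Qed.
Lemma size_pat_swap x y p : size_pat (swap_pat x y p) = size_pat p.
Proof. by elim: p => //= a -> b ->. Qed.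
Lemma erase_pat_swap x y p : erase_pat (swap_pat x y p) = erase_pat p.
Proof. by elim: p => //= a -> b ->. Qed.
Lemma erase_swap x y P : erase (swap_proc x y P) = erase P.
Proof. by elim: P => //= [a -> b ->|a ->|n a ->|p a ->]; rewrite ?erase_pat_swap. Qed.
Lemma swap_pat_comm a b x y p :
  swap_pat a b (swap_pat x y p) = swap_pat (sw a b x) (sw a b y) (swap_pat a b p).
Proof. by elim: p => /= [n|n|n|p -> q ->]; rewrite // sw_comm //; exact: sw_inj. Qed.
Lemma swap_proc_comm a b x y P :
  swap_proc a b (swap_proc x y P) = swap_proc (sw a b x) (sw a b y) (swap_proc a b P).
Proof.
have si := @sw_inj a b.
elim: P => /= [|P IHP Q IHQ|P IHP|n P IHP|p P IHP]; rewrite ?IHP ?IHQ //.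
  by rewrite sw_comm.
by rewrite swap_pat_comm.
Qed.
Lemma fn_swap_fresh x y P : x \notin fn P -> y \notin fn P -> fn (swap_proc x y P) = fn P.
Proof.
move=> hx hy; rewrite fn_swap -[RHS]map_id; apply/eq_in_map => z zin.
by apply: swap_other; [apply: (contraNneq _ hx)|apply: (contraNneq _ hy)] => <-.
Qed.

Lemma swap_Res x y P : Res y (swap_proc x y P) = swap_proc x y (Res x P).
Proof. by rewrite /= swapl. Qed.

Lemma alpha_fn P Q : alpha P Q -> fn P =i fn Q.
Proof.
elim.
- by [].
- by move=> P0 Q0 _ h z; rewrite h.
- by move=> P0 Q0 R0 _ h1 _ h2 z; rewrite h1 h2.
- by move=> P0 P' Q0 Q' _ h1 _ h2 z; rewrite /= !mem_cat h1 h2.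
- by move=> P0 P' _ h z; rewrite /= h.
- by move=> x P0 P' _ h z; rewrite /= !mem_filter h.
- by move=> p P0 P' _ h z; rewrite /= !mem_cat !mem_filter h.
- move=> x y P0 hy; rewrite swap_Res fn_swap_fresh //.
  by rewrite mem_filter eqxx.
- move=> p P0 x y xb xf hy.
  have -> : Case (swap_pat x y p) (swap_proc x y P0) = swap_proc x y (Case p P0) by [].
  rewrite fn_swap_fresh //.
  by rewrite /= mem_cat negb_or xf mem_filter xb.
Qed.

Lemma alpha_erase P Q : alpha P Q -> erase P = erase Q.
Proof.
elim=> //=; try congruence.
- by move=> x y P0 _; rewrite erase_swap.
- by move=> p P0 x y _ _ _; rewrite erase_swap erase_pat_swap.
Qed.

Lemma alpha_psize P Q : alpha P Q -> psize P = psize Q.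
Proof. by move/alpha_erase=> h; rewrite -psize_erase h psize_erase. Qed.

Lemma alpha_swap a b P Q : alpha P Q -> alpha (swap_proc a b P) (swap_proc a b Q).
Proof.
elim=> /=.
- by move=> *; apply: a_refl.
- by move=> *; apply: a_sym.
- by move=> P0 Q0 R0 _ h1 _ h2; exact: a_trans h1 h2.
- by move=> *; apply: a_par.
- by move=> *; apply: a_rep.
- by move=> *; apply: a_res.
- by move=> *; apply: a_case.
- move=> x y P0 hy; rewrite swap_proc_comm; apply: a_res_ren.
  have -> : Res (sw a b x) (swap_proc a b P0) = swap_proc a b (Res x P0) by [].
  by rewrite fn_swap (mem_map (@sw_inj a b)).
- move=> p P0 x y xb xf hy; rewrite swap_proc_comm swap_pat_comm; apply: a_case_ren.
  + by rewrite bn_swap (mem_map (@sw_inj a b)).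
  + by rewrite fnp_swap (mem_map (@sw_inj a b)).
  + have -> : Case (swap_pat a b p) (swap_proc a b P0) = swap_proc a b (Case p P0) by [].
    by rewrite fn_swap (mem_map (@sw_inj a b)).
Qed.

Lemma alpha_ParE P Q : alpha P Q -> forall A B, P = Par A B ->
  exists A' B', Q = Par A' B' /\ alpha A A' /\ alpha B B'.
Proof.
move=> h; have e := alpha_erase h.
move=> A B hP; subst P; case: Q h e => //= A' B' h _.
suff: alpha A A' /\ alpha B B' by case=> ??; exists A', B'.
have: (forall P Q, alpha P Q -> forall A B A' B', P = Par A B -> Q = Par A' B' -> alpha A A' /\ alpha B B').
  move=> P Q; elim=> //.
  - move=> P0 A0 B0 A0' B0' e1 e2; rewrite e1 in e2; case: e2 => -> ->.
    by split; apply: a_refl.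
  - by move=> P0 Q0 _ ih A0 B0 A0' B0' e1 e2; case: (ih _ _ _ _ e2 e1); split; apply: a_sym.
  - move=> P0 Q0 R0 h1 ih1 h2 ih2 A0 B0 A0' B0' e1 e2.
    have := alpha_erase h1; rewrite e1; case: Q0 h1 h2 ih1 ih2 => //= C D h1 h2 ih1 ih2 _.
    case: (ih1 _ _ _ _ e1 erefl) => h3 h4; case: (ih2 _ _ _ _ erefl e2) => h5 h6.
    by split; [exact: a_trans h3 h5|exact: a_trans h4 h6].
  - by move=> P0 P' Q0 Q' h1 _ h2 _ A0 B0 A0' B0' [<- <-] [<- <-].
move=> H; exact: (H _ _ h _ _ _ _ erefl erefl).
Qed.

Lemma alpha_RepE P Q : alpha P Q -> forall A, P = Rep A ->
  exists A', Q = Rep A' /\ alpha A A'.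
Proof.
move=> h; have e := alpha_erase h.
move=> A hP; subst P; case: Q h e => //= A' h _.
suff: alpha A A' by exists A'.
have: (forall P Q, alpha P Q -> forall A A', P = Rep A -> Q = Rep A' -> alpha A A').
  move=> P Q; elim=> //.
  - move=> P0 A0 A0' e1 e2; rewrite e1 in e2; case: e2 => ->.
    exact: a_refl.
  - by move=> P0 Q0 _ ih A0 A0' e1 e2; apply: a_sym; apply: ih.
  - move=> P0 Q0 R0 h1 ih1 h2 ih2 A0 A0' e1 e2.
    have := alpha_erase h1; rewrite e1; case: Q0 h1 h2 ih1 ih2 => //= C h1 h2 ih1 ih2 _.
    by apply: a_trans; [apply: ih1|apply: ih2].
  - by move=> P0 P' h0 _ A0 A0' [<-] [<-].
move=> H; exact: (H _ _ h _ _ erefl erefl).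
Qed.

Definition perm_name (pi : seq (name * name)) (n : name) : name :=
  foldr (fun e n => sw e.1 e.2 n) n pi.
Definition perm_proc (pi : seq (name * name)) (P : proc) : proc :=
  foldr (fun e P => swap_proc e.1 e.2 P) P pi.

Lemma perm_nameK pi n : perm_name (rev pi) (perm_name pi n) = n.
Proof.
elim: pi n => //= e pi ih n; rewrite rev_cons /perm_name foldr_rcons /= swK.
exact: ih.
Qed.
Lemma perm_nameKV pi n : perm_name pi (perm_name (rev pi) n) = n.
Proof. by rewrite -{1}(revK pi) perm_nameK. Qed.
Lemma perm_procK pi P : perm_proc (rev pi) (perm_proc pi P) = P.
Proof.
elim: pi P => //= e pi ih P; rewrite rev_cons /perm_proc foldr_rcons /= swap_procK.
exact: ih.
Qed.
Lemma perm_name_inj pi : injective (perm_name pi).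
Proof. exact: can_inj (@perm_nameK pi). Qed.
Lemma alpha_perm pi P Q : alpha P Q -> alpha (perm_proc pi P) (perm_proc pi Q).
Proof. by elim: pi => //= e pi ih h; apply: alpha_swap; apply: ih. Qed.
Lemma fn_perm pi P : fn (perm_proc pi P) = map (perm_name pi) (fn P).
Proof. by elim: pi => /= [|e pi ih]; rewrite ?map_id // fn_swap ih -map_comp. Qed.
Lemma perm_proc_cat p1 p2 P : perm_proc (p1 ++ p2) P = perm_proc p1 (perm_proc p2 P).
Proof. by rewrite /perm_proc foldr_cat. Qed.
Lemma perm_name_cat p1 p2 n : perm_name (p1 ++ p2) n = perm_name p1 (perm_name p2 n).
Proof. by rewrite /perm_name foldr_cat. Qed.

Definition res_rel P Q := forall m A, P = Res m A ->
  exists k A' pi, Q = Res k A' /\ alpha (perm_proc pi A) A' /\ perm_name pi m = k /\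
     {in fn P, forall z, perm_name pi z = z}.

Lemma alpha_ResE P Q : alpha P Q -> res_rel P Q.
Proof.
elim.
- move=> P0 m A ->; exists m, A, [::]; split=> //; split; first exact: a_refl.
  by [].
- move=> P0 Q0 h ih m A e.
  have := alpha_erase h; rewrite e; case: P0 h ih => //= k A' h ih _.
  case: (ih k A' erefl) => m' [A0] [pi] [e1 [h1 [h2 h3]]].
  rewrite e in e1; case: e1 => e1 e1'; subst m' A0.
  exists k, A', (rev pi); split=> //; split.
    by have := alpha_perm (rev pi) h1; rewrite perm_procK => /a_sym.
  split; first by rewrite e1 perm_nameK.
  move=> z zin; have hz : z \in fn (Res k A') by rewrite (alpha_fn h) e.
  by rewrite -{1}(h3 z hz) perm_nameK.
- move=> P0 Q0 R0 h1 ih1 h2 ih2 m A e.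
  case: (ih1 m A e) => k [A'] [pi] [e1 [h3 [h4 h5]]].
  case: (ih2 k A' e1) => k2 [A2] [pi2] [e2 [h6 [h7 h8]]].
  exists k2, A2, (pi2 ++ pi); split=> //; split.
    rewrite perm_proc_cat; apply: a_trans h6; exact: alpha_perm.
  split; first by rewrite perm_name_cat h4.
  move=> z zin; rewrite perm_name_cat h5 // h8 //.
  by rewrite -(alpha_fn h1).
- by [].
- by [].
- move=> x P0 P' h _ m A [<- <-]; exists x, P', [::]; split=> //; split=> //.
- by [].
- move=> x y P0 hy m A [<- <-]; exists y, (swap_proc x y P0), [:: (x, y)]; split=> //.
  split; first exact: a_refl.
  split; first by rewrite /= swapl.
  move=> z zin /=; apply: swap_other; first by move: zin; rewrite mem_filter => /andP[].
  by apply: contraNneq hy => <-.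
- by [].
Qed.

Lemma scong_fn P Q : scong P Q -> fn P =i fn Q.
Proof.
elim.
- by [].
- by move=> P0 Q0 _ h z; rewrite h.
- by move=> P0 Q0 R0 _ h1 _ h2 z; rewrite h1 h2.
- by move=> P0 P' Q0 Q' _ h1 _ h2 z; rewrite /= !mem_cat h1 h2.
- by move=> P0 P' _ h z; rewrite /= h.
- by move=> x P0 P' _ h z; rewrite /= !mem_filter h.
- by move=> p P0 P' _ h z; rewrite /= !mem_cat !mem_filter h.
- by move=> P0 Q0 h; exact: alpha_fn.
- by move=> P0 z; rewrite /= cats0.
- by move=> P0 Q0 z; rewrite /= !mem_cat orbC.
- by move=> P0 Q0 R0 z; rewrite /= !mem_cat orbA.
- by move=> n z; rewrite /=.
- move=> n m P0 z; rewrite /= !mem_filter.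
  by case: (z != n); case: (z != m).
- by move=> P0 z; rewrite /= mem_cat orbb.
- move=> P0 n Q0 hn z; rewrite /= mem_cat !mem_filter mem_cat.
  case: (eqVneq z n) => [->|] //=; by rewrite (negbTE hn).
Qed.

Lemma scong_swap a b P Q : scong P Q -> scong (swap_proc a b P) (swap_proc a b Q).
Proof.
elim=> /=.
- by move=> *; apply: s_refl.
- by move=> *; apply: s_sym.
- by move=> P0 Q0 R0 _ h1 _ h2; exact: s_trans h1 h2.
- by move=> *; apply: s_par.
- by move=> *; apply: s_rep.
- by move=> *; apply: s_res.
- by move=> *; apply: s_case.
- by move=> P0 Q0 h; apply: s_alpha; apply: alpha_swap.
- by move=> *; apply: s_par0.
- by move=> *; apply: s_parC.
- by move=> *; apply: s_parA.
- by move=> *; apply: s_res0.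
- by move=> *; apply: s_resC.
- by move=> *; apply: s_repU.
- move=> P0 n Q0 hn; apply: s_extr.
  by rewrite fn_swap (mem_map (@sw_inj a b)).
Qed.

Lemma scong_perm pi P Q : scong P Q -> scong (perm_proc pi P) (perm_proc pi Q).
Proof. by elim: pi => //= e pi ih h; apply: scong_swap; apply: ih. Qed.

Lemma psize_swap a b P : psize (swap_proc a b P) = psize P.
Proof. by rewrite -psize_erase erase_swap psize_erase. Qed.
Lemma psize_perm pi P : psize (perm_proc pi P) = psize P.
Proof. by elim: pi => //= e pi ih; rewrite psize_swap. Qed.
Lemma erase_perm pi P : erase (perm_proc pi P) = erase P.
Proof. by elim: pi => //= e pi ih; rewrite erase_swap. Qed.

Lemma fn_res_seq l R z : (z \in fn (res_seq l R)) = (z \notin l) && (z \in fn R).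
Proof.
elim: l => //= n l ih; rewrite mem_filter ih in_cons negb_or.
by case: (z != n); case: (z \in l).
Qed.
Lemma psize_res_seq l R : psize (res_seq l R) = size l + psize R.
Proof. by elim: l => //= n l ->. Qed.
Lemma scong_res_seq l A B : scong A B -> scong (res_seq l A) (res_seq l B).
Proof. by elim: l => //= n l ih h; apply: s_res; apply: ih. Qed.
Lemma extr_res_seq l T U : disj l (fn T) ->
  scong (Par T (res_seq l U)) (res_seq l (Par T U)).
Proof.
elim: l => /= [_|n l ih /andP[hn hl]]; first exact: s_refl.
apply: s_trans; first by apply: s_extr.
by apply: s_res; apply: ih.
Qed.

Lemma lookup_remove_dom s xs x :
  lookup (remove_dom s xs) x = if x \in xs then None else lookup s x.
Proof.
elim: s => [|[y t] s ih]; first by rewrite /=; case: ifP.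
rewrite /remove_dom /= -/(remove_dom s xs).
case hy: (y \in xs) => /=; rewrite ih.
  by case: (eqVneq x y) => [->|]; rewrite ?hy.
by case: (eqVneq x y) => [->|]; rewrite ?hy.
Qed.

Lemma lookup_None s x : (lookup s x = None) <-> (x \notin map fst s).
Proof.
elim: s => [|[y t] s ih] //=; rewrite in_cons negb_or.
by case: ifP => //= _.
Qed.

Lemma lookup_In s x t : lookup s x = Some t -> (x, t) \in s.
Proof.
elim: s => [|[y u] s ih] //=; case: ifP => [/eqP -> [->]|_ h]; rewrite in_cons ?eqxx //.
by rewrite ih ?orbT.
Qed.

Lemma subst_pat_eq s s' p : {in fnp p, forall x, lookup s x = lookup s' x} ->
  subst_pat s p = subst_pat s' p.
Proof.
rewrite /fnp; elim: p => //= [x|x|a iha b ihb] h.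
- by rewrite h // in_cons eqxx.
- by rewrite h // in_cons eqxx.
- rewrite iha ?ihb // => z hz; apply: h; move: hz; rewrite !mem_cat; by case/orP=> ->; rewrite ?orbT.
Qed.

Lemma psubst_eq_fn P s s' : {in fn P, forall x, lookup s x = lookup s' x} ->
  psubst s P = psubst s' P.
Proof.
elim: P s s' => //= [a iha b ihb|a iha|n a iha|p a iha] s s' h.
- by rewrite (iha s s') ?(ihb s s') // => z hz; apply: h; rewrite mem_cat hz ?orbT.
- by rewrite (iha s s').
- rewrite (iha _ (remove_dom s' [:: n])) // => z hz.
  rewrite !lookup_remove_dom; case: ifP => // hzn; apply: h.
  rewrite mem_filter hz andbT; apply: contraFN hzn => /eqP ->.
  by rewrite mem_seq1.
- rewrite (subst_pat_eq (s' := s')); last by move=> z hz; apply: h; rewrite mem_cat hz.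
  rewrite (iha _ (remove_dom s' (bn p))) // => z hz.
  rewrite !lookup_remove_dom; case: ifP => // hzn; apply: h.
  by rewrite mem_cat mem_filter hz hzn orbT.
Qed.

Lemma remove_dom_nil xs : remove_dom [::] xs = [::]. Proof. by []. Qed.
Lemma subst_pat_nil p : subst_pat [::] p = p.
Proof. by elim: p => //= a -> b ->. Qed.
Lemma psubst_nil P : psubst [::] P = P.
Proof. by elim: P => //= [a -> b ->|a ->|n a ->|p a ->]; rewrite ?subst_pat_nil. Qed.

Lemma psubst_id s P : {in fn P, forall x, x \notin map fst s} -> psubst s P = P.
Proof.
move=> h; rewrite -[RHS](psubst_nil P); apply: psubst_eq_fn => x hx /=.
by apply/lookup_None; apply: h.
Qed.

Definition csub (s : subst) : nat := foldr (fun e m => maxn (size_pat e.2) m) 1 s.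
Lemma csub_ge1 s : 1 <= csub s.
Proof. by elim: s => //= e s ih; rewrite leq_max ih orbT. Qed.
Lemma csub_In s e : e \in s -> size_pat e.2 <= csub s.
Proof.
elim: s => //= e' s ih; rewrite in_cons => /orP[/eqP <-|h]; rewrite leq_max ?leqnn //.
by rewrite ih ?orbT.
Qed.
Lemma csub_sub s1 s2 : {subset s1 <= s2} -> csub s1 <= csub s2.
Proof.
elim: s1 => [|e s1 ih] h /=; first exact: csub_ge1.
rewrite geq_max csub_In ?ih //; first by move=> e' h'; apply: h; rewrite in_cons h' orbT.
by apply: h; rewrite in_cons eqxx.
Qed.
Lemma csub_remove s xs : csub (remove_dom s xs) <= csub s.
Proof. by apply: csub_sub => e; rewrite mem_filter => /andP[]. Qed.

Lemma size_pat_protect t : size_pat (protect t) = size_pat t.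
Proof. by elim: t => //= a -> b ->. Qed.
Lemma size_subst_pat s p : size_pat (subst_pat s p) <= size_pat p * csub s.
Proof.
have c1 := csub_ge1 s.
elim: p => /= [x|x|x|a iha b ihb].
- by rewrite mul1n.
- case e: lookup => [t|]; last by rewrite mul1n.
  by rewrite mul1n; apply: (csub_In (lookup_In e)).
- case e: lookup => [t|]; last by rewrite mul1n.
  by rewrite mul1n size_pat_protect; apply: (csub_In (lookup_In e)).
- nia.
Qed.
Lemma psize_psubst s P : psize (psubst s P) <= psize P * csub s.
Proof.
elim: P s => /= [|a iha b ihb|a iha|n a iha|p a iha] s; have c1 := csub_ge1 s.
- nia.
- have := iha s; have := ihb s; nia.
- have := iha s; nia.
- have := iha (remove_dom s [:: n]); have := csub_remove s [:: n]; nia.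
- have := iha (remove_dom s (bn p)); have := csub_remove s (bn p).
  have := size_subst_pat s p; nia.
Qed.

Definition swap_subst a b (s : subst) : subst :=
  map (fun e => (sw a b e.1, swap_pat a b e.2)) s.
Lemma swap_substK a b : involutive (swap_subst a b).
Proof. by elim=> //= [[x t] s ih]; rewrite /= ih swK swap_patK. Qed.
Lemma keys_swap a b s : map fst (swap_subst a b s) = map (sw a b) (map fst s).
Proof. by rewrite /swap_subst -!map_comp. Qed.
Lemma lookup_swap a b s x :
  lookup (swap_subst a b s) (sw a b x) = omap (swap_pat a b) (lookup s x).
Proof.
elim: s => [|[y t] s ih] //=; rewrite (inj_eq (@sw_inj a b)).
by case: ifP.
Qed.
Lemma protect_swap a b t : swap_pat a b (protect t) = protect (swap_pat a b t).
Proof. by elim: t => //= u -> v ->. Qed.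
Lemma subst_pat_swap a b s p :
  swap_pat a b (subst_pat s p) = subst_pat (swap_subst a b s) (swap_pat a b p).
Proof.
elim: p => //= [x|x|u -> v -> //]; rewrite lookup_swap; case: lookup => //= t.
by rewrite protect_swap.
Qed.
Lemma remove_dom_swap a b s xs :
  swap_subst a b (remove_dom s xs) = remove_dom (swap_subst a b s) (map (sw a b) xs).
Proof.
rewrite /remove_dom /swap_subst filter_map; congr (map _ _).
by apply: eq_filter => e /=; rewrite (mem_map (@sw_inj a b)).
Qed.
Lemma psubst_swap a b s P :
  swap_proc a b (psubst s P) = psubst (swap_subst a b s) (swap_proc a b P).
Proof.
elim: P s => //= [u iu v iv|u iu|n u iu|p u iu] s.
- by rewrite iu iv.
- by rewrite iu.
- by rewrite iu remove_dom_swap.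
- by rewrite iu subst_pat_swap remove_dom_swap bn_swap.
Qed.
Lemma csub_swap a b s : csub (swap_subst a b s) = csub s.
Proof. by elim: s => //= e s ->; rewrite size_pat_swap. Qed.

Lemma safe_Par s A B : safe s (Par A B) = safe s A && safe s B.
Proof. by rewrite /safe /= all_cat. Qed.
Lemma safe_Res s k A : safe s (Res k A) -> safe s A.
Proof. by rewrite /safe /= => /andP[]. Qed.
Lemma safe_sub s1 s X : {subset s1 <= s} -> safe s X -> safe s1 X.
Proof.
move=> h /allP hs; apply/allP => b hb; have /allP hb' := hs b hb.
by apply/allP => e he; apply: hb'; apply: h.
Qed.
Lemma safe_nil X : safe [::] X.
Proof. by apply/allP. Qed.
Lemma safe_swap a b s X : safe (swap_subst a b s) (swap_proc a b X) = safe s X.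
Proof.
rewrite /safe bnames_swap all_map; apply: eq_all => x /=.
rewrite /swap_subst all_map; apply: eq_all => e /=.
by rewrite pnames_swap (mem_map (@sw_inj a b)).
Qed.

Lemma mem_fnp_comp x a b : (x \in fnp (PComp a b)) = (x \in fnp a) || (x \in fnp b).
Proof.
rewrite /fnp /= !mem_cat.
by case: (x \in vn a); case: (x \in vn b); case: (x \in pn a); case: (x \in pn b).
Qed.

Definition valsOK (s : subst) (q : pat) :=
  forall e, e \in s -> size_pat e.2 <= size_pat q /\ {subset fnp e.2 <= fnp q}.

Lemma valsOK_cat s1 s2 q1 q2 : valsOK s1 q1 -> valsOK s2 q2 -> valsOK (s1 ++ s2) (PComp q1 q2).
Proof.
move=> h1 h2 e; rewrite mem_cat => /orP[/h1|/h2] [hs hf].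
  split; first by apply: (leq_trans hs); rewrite /= ltnW // ltnS leq_addr.
  by move=> z hz; rewrite mem_fnp_comp hf.
split; first by apply: (leq_trans hs); rewrite /= ltnW // ltnS leq_addl.
by move=> z hz; rewrite mem_fnp_comp hf ?orbT.
Qed.
Lemma valsOK_nil q : valsOK [::] q. Proof. by []. Qed.
Lemma valsOK_one x q : valsOK [:: (x, q)] q.
Proof. by move=> e; rewrite mem_seq1 => /eqP -> /=; split. Qed.

Lemma unify_spec p q s r : unify p q = Some (s, r) ->
  [/\ map fst s = bn p, map fst r = bn q, valsOK s q & valsOK r p].
Proof.
have vn0 : forall q, valsOK [::] q by move=> q0 e; rewrite in_nil.
elim: p q s r => [x|x|x|p1 ih1 p2 ih2] [y|y|y|q1 q2] s r /=;
  try (by []);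
  try (case=> <- <-; split => //; solve [exact: valsOK_one | exact: vn0]);
  try (case: ifP => // hc [<- <-]; split => //;
       solve [exact: valsOK_one | exact: vn0 | by case/andP: hc => /eqP /= ->]).
case e1: (unify p1 q1) => [[s1 r1]|] //; case e2: (unify p2 q2) => [[s2 r2]|] //.
case=> <- <-; have [a1 b1 c1 d1] := ih1 _ _ _ e1; have [a2 b2 c2 d2] := ih2 _ _ _ e2.
by split; rewrite ?map_cat ?a1 ?a2 ?b1 ?b2 //; apply: valsOK_cat.
Qed.

Lemma csub_valsOK s q : valsOK s q -> csub s <= maxn 1 (size_pat q).
Proof.
elim: s => [|e s ih] h /=; first by rewrite leq_max leqnn.
rewrite geq_max ih; last by move=> e' he'; apply: h; rewrite in_cons he' orbT.
have [] := h e; first by rewrite in_cons eqxx.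
by move=> hs _; rewrite leq_max hs orbT.
Qed.

Definition lab_fresh (R : proc) (mu : label) : Prop :=
  match mu with Tau => True | Out ns p => disj ns (fn R) end.

Lemma disj_sub a b b' : {subset b' <= b} -> disj a b -> disj a b'.
Proof. move=> h /allP ha; apply/allP => x hx; apply: contra (ha x hx); exact: h. Qed.

Lemma trans_fresh R mu R' : trans R mu R' -> lab_fresh R mu.
Proof.
elim=> //=.
- move=> P P0 [|ns p] P1 P2 h _ ih _ //=; apply: disj_sub ih => z; by rewrite (alpha_fn h).
- move=> n P [|ns p] P' _ ih _ //=; apply: disj_sub ih => z; by rewrite mem_filter => /andP[].
- move=> m P ns p P' _ ih hm _ _ _; rewrite /disj all_rcons mem_filter eqxx /=.
  by apply: disj_sub ih => z; rewrite mem_filter => /andP[].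
- move=> P Q ns p P' _ ih hd; apply/allP => z hz; rewrite mem_cat negb_or.
  move/allP: ih => /(_ z hz) ->; move/allP: hd => /(_ z); rewrite mem_cat hz; exact.
- move=> P Q ns p Q' _ ih hd; apply/allP => z hz; rewrite mem_cat negb_or.
  move/allP: ih => /(_ z hz) ->; move/allP: hd => /(_ z); rewrite mem_cat hz => ->; exact.
- move=> P [|ns p] P' _ ih //=; apply: disj_sub ih => z /= hz; by rewrite mem_cat hz.
Qed.

Definition lab_size (R : proc) (mu : label) : Prop :=
  match mu with Tau => True | Out ns p => size_pat p <= maxpat R /\ size ns <= nres R end.

Lemma trans_lab_size R mu R' : trans R mu R' -> lab_size R mu.
Proof.
elim=> //=.
- move=> P P0 [|ns p] P1 P2 h _ ih _ //=.
  by rewrite -maxpat_erase -nres_erase (alpha_erase h) maxpat_erase nres_erase.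
- by move=> p P; rewrite leq_max leqnn.
- by move=> n P [|ns p] P' _ ih _ //=; case: ih => h1 h2; split=> //; lia.
- by move=> m P ns p P' _ [h1 h2] *; rewrite size_rcons; split=> //; lia.
- by move=> P Q ns p P' _ [h1 h2] _; split; lia.
- by move=> P Q ns p Q' _ [h1 h2] _; split; lia.
- by move=> P [|ns p] P' _ ih //=; move: ih => /=; rewrite !maxnn.
Qed.

Definition INVo (B : nat) (K : seq name) (R' : proc) : Prop :=
  forall s, {subset map fst s <= K} -> forall X, alpha R' X -> safe s X ->
    exists Q, scong (psubst s X) Q /\ psize Q <= B * csub s.

Definition INV (B : nat) (mu : label) (R' : proc) : Prop :=
  match mu with
  | Tau => exists Q, scong R' Q /\ psize Q <= B
  | Out ns p => INVo B (bn p) R'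
  end.

Lemma INVo_alpha B K R1 R2 : INVo B K R1 -> alpha R1 R2 -> INVo B K R2.
Proof. by move=> h a s hs X hX; apply: h => //; exact: a_trans a hX. Qed.
Lemma INV_alpha B mu R1 R2 : INV B mu R1 -> alpha R1 R2 -> INV B mu R2.
Proof.
case: mu => [|ns p] /=; last exact: INVo_alpha.
move=> [Q [h1 h2]] a; exists Q; split=> //; apply: s_trans h1.
by apply: s_alpha; apply: a_sym.
Qed.
Lemma INVo_mono B B' K R : B <= B' -> INVo B K R -> INVo B' K R.
Proof.
move=> hb h s hs X hX hsf; have [Q [h1 h2]] := h s hs X hX hsf; exists Q; split=> //.
by apply: leq_trans h2 _; rewrite leq_mul2r hb orbT.
Qed.
Lemma INV_mono B B' mu R : B <= B' -> INV B mu R -> INV B' mu R.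
Proof.
case: mu => [|ns p] /=; last exact: INVo_mono.
by move=> hb [Q [h1 h2]]; exists Q; split=> //; apply: leq_trans hb.
Qed.

Lemma INVo_swap a b B K R : INVo B K R -> INVo B (map (sw a b) K) (swap_proc a b R).
Proof.
move=> h s hs X hX hsf.
have hs' : {subset map fst (swap_subst a b s) <= K}.
  move=> x; rewrite keys_swap => /mapP[y /hs /mapP[z zK ->] ->]; by rewrite swK.
have hX' : alpha R (swap_proc a b X) by have := alpha_swap a b hX; rewrite swap_procK.
have hsf' : safe (swap_subst a b s) (swap_proc a b X) by rewrite safe_swap.
have [Q [h1 h2]] := h _ hs' _ hX' hsf'.
exists (swap_proc a b Q); split; last by rewrite psize_swap; rewrite csub_swap in h2.
have := scong_swap a b h1; by rewrite psubst_swap swap_substK swap_procK.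
Qed.

Lemma INVo_perm pi B K R : INVo B K R -> INVo B (map (perm_name pi) K) (perm_proc pi R).
Proof.
elim: pi => [|e pi ih] h /=; first by rewrite map_id.
have := @INVo_swap e.1 e.2 _ _ _ (ih h); by rewrite -map_comp.
Qed.

Lemma lookup_filter_key (L : seq name) s x :
  lookup (filter (fun e => e.1 \in L) s) x = if x \in L then lookup s x else None.
Proof.
elim: s => [|[y t] s ih] /=; first by case: ifP.
case hy: (y \in L) => /=; rewrite ih.
  by case: (eqVneq x y) => [->|]; rewrite ?hy.
by case: (eqVneq x y) => [->|]; rewrite ?hy.
Qed.

Lemma INVo_Res B K m A' : INVo B K A' -> INVo B.+1 K (Res m A').
Proof.
move=> h s hs X hX hsf.
have [k [A''] [pi] [eX [h1 [h2 h3]]]] := alpha_ResE hX (erefl _).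
subst X => /=.
set s0 := remove_dom s [:: k].
set s1 := filter (fun e => e.1 \in fn A'') s0.
have e1 : psubst s0 A'' = psubst s1 A''.
  by apply: psubst_eq_fn => x hx; rewrite /s1 lookup_filter_key hx.
have sub1 : {subset s1 <= s}.
  by move=> e; rewrite /s1 /s0 !mem_filter => /andP[_ /andP[]].
have hk : {subset map fst s1 <= map (perm_name pi) K}.
  move=> x /mapP[e he ->]; move: (he); rewrite /s1 /s0 !mem_filter => /andP[hA /andP[hk hs0]].
  have hxf : e.1 \in fn (Res m A').
    by rewrite (alpha_fn hX) /= mem_filter hA andbT; rewrite mem_seq1 in hk.
  rewrite -(h3 _ hxf); apply: map_f; apply: hs; exact: map_f.
have [Q [q1 q2]] := @INVo_perm pi _ _ _ h _ hk _ h1 (safe_sub sub1 (safe_Res hsf)).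
exists (Res k Q); split; first by rewrite e1; apply: s_res.
have c1 := csub_sub sub1; have c0 := csub_ge1 s; simpl; nia.
Qed.

Lemma sc_pAC a b c : scong (Par (Par a b) c) (Par (Par a c) b).
Proof.
apply: s_trans; first by apply: s_sym; apply: s_parA.
apply: s_trans; first by apply: s_par; [apply: s_refl|apply: s_parC].
exact: s_parA.
Qed.
Lemma sc_p4 a b c d : scong (Par (Par a b) (Par c d)) (Par (Par a c) (Par b d)).
Proof.
apply: s_trans; first by apply: s_parA.
apply: s_trans; first by apply: s_par; [apply: sc_pAC|apply: s_refl].
by apply: s_sym; apply: s_parA.
Qed.
Lemma sc_nilL a : scong a (Par Defs.Nil a).
Proof. by apply: s_sym; apply: s_trans; [apply: s_parC|apply: s_par0]. Qed.

Inductive J (P1 : proc) : proc -> Prop :=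
| J_nil : J P1 Defs.Nil
| J_copy L : alpha P1 L -> J P1 L
| J_par A B : J P1 A -> J P1 B -> J P1 (Par A B).

Inductive tr (P1 : proc) : bool -> proc -> Prop :=
| tr_copy L : alpha P1 L -> tr P1 false L
| tr_rep L : alpha P1 L -> tr P1 true (Rep L)
| tr_par b1 b2 A B : tr P1 b1 A -> tr P1 b2 B -> ~~ (b1 && b2) -> tr P1 (b1 || b2) (Par A B).

Definition Hb P1 (b : bool) H := if b then H = Rep P1 else J P1 H.

Lemma J_absorb P1 H : J P1 H -> scong (Par (Rep P1) H) (Rep P1).
Proof.
elim=> [|L a|A B _ iA _ iB].
- exact: s_par0.
- apply: s_trans; first by apply: s_par; [apply: s_refl|apply: s_alpha; apply: a_sym; exact: a].
  by apply: s_trans; [apply: s_parC|apply: s_sym; apply: s_repU].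
- apply: s_trans; first by apply: s_parA.
  apply: s_trans; first by apply: s_par; [exact: iA|apply: s_refl].
  exact: iB.
Qed.

Lemma Hb_combine P1 b1 b2 H1 H2 : Hb P1 b1 H1 -> Hb P1 b2 H2 -> ~~ (b1 && b2) ->
  exists H, Hb P1 (b1 || b2) H /\ scong (Par H1 H2) H.
Proof.
case: b1; case: b2 => //= h1 h2 _.
- by subst H1; exists (Rep P1); split=> //; apply: J_absorb.
- subst H2; exists (Rep P1); split=> //; apply: s_trans; first by apply: s_parC.
  exact: J_absorb.
- by exists (Par H1 H2); split; [apply: J_par|apply: s_refl].
Qed.

Lemma tr_collapse P1 b T : tr P1 b T -> exists H, Hb P1 b H /\ scong T H.
Proof.
elim=> [L a|L a|b1 b2 A B _ [H1 [h1 e1]] _ [H2 [h2 e2]] hb].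
- by exists L; split; [apply: J_copy|apply: s_refl].
- exists (Rep P1); split=> //; apply: s_rep; apply: s_alpha; exact: a_sym.
- have [H [h e]] := Hb_combine h1 h2 hb; exists H; split=> //.
  by apply: s_trans e; apply: s_par.
Qed.

Lemma Hb_fn P1 b H : Hb P1 b H -> {subset fn H <= fn P1}.
Proof.
case: b => /= [->|] //; elim=> [|L a|A B _ iA _ iB] z //=.
- by rewrite (alpha_fn a).
- by rewrite mem_cat => /orP[/iA|/iB].
Qed.

Lemma tr_fn P1 b T : tr P1 b T -> {subset fn P1 <= fn T}.
Proof.
elim=> [L a|L a|b1 b2 A B _ iA _ iB _] z hz /=; try by rewrite -(alpha_fn a).
by rewrite mem_cat iA.
Qed.

Lemma tr_alpha P1 b T : tr P1 b T -> forall T', alpha T T' -> tr P1 b T'.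
Proof.
elim=> [L a|L a|b1 b2 A B _ iA _ iB hb] T' hT.
- by apply: tr_copy; apply: a_trans hT.
- have [L' [-> h]] := alpha_RepE hT (erefl _); apply: tr_rep; exact: a_trans h.
- have [A' [B' [-> [h1 h2]]]] := alpha_ParE hT (erefl _).
  by apply: tr_par => //; [apply: iA|apply: iB].
Qed.

Lemma tr_inv P1 b R : tr P1 b R ->
  (b = false /\ alpha P1 R) \/ (exists L, [/\ b = true, R = Rep L & alpha P1 L]) \/
  (exists b1 b2 A B, [/\ b = b1 || b2, R = Par A B, tr P1 b1 A, tr P1 b2 B & ~~ (b1 && b2)]).
Proof.
case=> [L a|L a|b1 b2 A B h1 h2 hb]; first by left.
- by right; left; exists L.
- by right; right; exists b1, b2, A, B.
Qed.

Definition TauD P1 Y := exists R0,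
  (erase R0 = erase P1 \/ erase R0 = erase (Par P1 P1)) /\ trans R0 Tau Y.

Definition TInv P1 b mu R' :=
  match mu with
  | Tau => exists H Y, [/\ Hb P1 b H, TauD P1 Y & scong R' (Par H Y)]
  | Out ms p => exists L L', [/\ alpha P1 L, trans L (Out ms p) L' &
      forall s, {subset map fst s <= bn p} -> forall X, alpha R' X -> safe s X ->
        exists X1 H, [/\ alpha L' X1, safe s X1, Hb P1 b H &
                        scong (psubst s X) (Par H (psubst s X1))]]
  end.

Lemma TInv_copy P1 L mu R' : alpha P1 L -> trans L mu R' -> TInv P1 false mu R'.
Proof.
case: mu => [|ms p] a h /=.
- exists Defs.Nil, R'; split => //; first exact: J_nil.
  + by exists L; split=> //; left; apply/esym/alpha_erase.
  + exact: sc_nilL.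
- exists L, R'; split=> // s _ X hX hs; exists X, Defs.Nil; split => //; first exact: J_nil.
  exact: sc_nilL.
Qed.

Lemma TInv_alpha P1 b mu R1 R2 : TInv P1 b mu R1 -> alpha R1 R2 -> TInv P1 b mu R2.
Proof.
case: mu => [|ms p] /=.
- move=> [H [Y [h1 h2 h3]]] a; exists H, Y; split=> //.
  by apply: s_trans h3; apply: s_alpha; apply: a_sym.
- move=> [L [L' [h1 h2 h3]]] a; exists L, L'; split=> // s hs X hX.
  by apply: h3 => //; apply: a_trans hX.
Qed.

Lemma disj_cat a b c : disj (a ++ b) c = disj a c && disj b c.
Proof. by rewrite /disj all_cat. Qed.

Lemma tree_main P1 R mu R' : trans R mu R' -> trans R mu R' ->
  forall b, tr P1 b R -> TInv P1 b mu R'.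
Proof.
elim.
-
  move=> P P0 mu0 P1' P2 a1 h ih a2 _ b hb.
  apply: TInv_alpha (ih h b (tr_alpha hb a1)) a2.
-
  move=> p P ht b hb; case: (tr_inv hb) => [[-> a]|[[L [_ e _]]|[b1 [b2 [A [B [_ e _ _ _]]]]]]] //.
  exact: TInv_copy a ht.
- move=> n P mu0 P' _ _ _ ht b hb.
  case: (tr_inv hb) => [[-> a]|[[L [_ e _]]|[b1 [b2 [A [B [_ e _ _ _]]]]]]] //.
  exact: TInv_copy a ht.
- move=> m P ns p P' _ _ _ _ _ _ ht b hb.
  case: (tr_inv hb) => [[-> a]|[[L [_ e _]]|[b1 [b2 [A [B [_ e _ _ _]]]]]]] //.
  exact: TInv_copy a ht.
-
  move=> P Q ms ns p q P' Q' s r hP ihP hQ ihQ hu d1 d2 d3 sf1 sf2 ht b hb.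
  case: (tr_inv hb) => [[-> a]|[[L [_ e _]]|[b1 [b2 [A [B [eb e tA tB hb12]]]]]]] //.
    exact: TInv_copy a ht.
  case: e => eA eB; subst A B b.
  have [LA [LA' [aA tA' FA]]] := ihP hP _ tA.
  have [LB [LB' [aB tB' FB]]] := ihQ hQ _ tB.
  have [ks kr _ _] := unify_spec hu.
  have hks : {subset map fst s <= bn p} by rewrite ks.
  have hkr : {subset map fst r <= bn q} by rewrite kr.
  have [X1 [HA [x1 sx1 hA eA]]] := FA s hks P' (a_refl _) sf1.
  have [X2 [HB [x2 sx2 hB eB]]] := FB r hkr Q' (a_refl _) sf2.
  have [H [hH eH]] := Hb_combine hA hB hb12.
  exists H, (res_seq (ms ++ ns) (Par (psubst s X1) (psubst r X2))); split=> //.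
    exists (Par LA LB); split.
      by right; rewrite /= -(alpha_erase aA) -(alpha_erase aB).
    apply: t_unify hu _ _ _ sx1 sx2.
    + by apply: t_alpha (a_refl _) tA' x1.
    + by apply: t_alpha (a_refl _) tB' x2.
    + by apply: disj_sub d1 => z; rewrite -(alpha_fn aB) => /(tr_fn tB).
    + by apply: disj_sub d2 => z; rewrite -(alpha_fn aA) => /(tr_fn tA).
    + exact: d3.
  apply: s_trans.
    apply: scong_res_seq; apply: s_par; [exact: eA|exact: eB].
  apply: s_trans; first by apply: scong_res_seq; apply: sc_p4.
  apply: s_trans; first by apply: s_sym; apply: extr_res_seq;
    rewrite disj_cat; apply/andP; split;
    [have := trans_fresh hP|have := trans_fresh hQ]; rewrite /=;
    apply: disj_sub => z; rewrite /= mem_cat => /orP[/(Hb_fn hA)|/(Hb_fn hB)];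
    solve [exact: (tr_fn tA)|exact: (tr_fn tB)].
  by apply: s_par; [exact: eH|exact: s_refl].
-
  move=> P Q P' hP ihP ht b hb.
  case: (tr_inv hb) => [[-> a]|[[L [_ e _]]|[b1 [b2 [A [B [eb e tA tB hb12]]]]]]] //.
    exact: TInv_copy a ht.
  case: e => eA eB; subst A B b.
  have [HA [YA [hA yA eA]]] := ihP hP _ tA.
  have [HB [hB eB]] := tr_collapse tB.
  have [H [hH eH]] := Hb_combine hA hB hb12.
  exists H, YA; split=> //.
  apply: s_trans; first by apply: s_par; [exact: eA|exact: eB].
  apply: s_trans; first by apply: sc_pAC.
  by apply: s_par; [exact: eH|exact: s_refl].
-
  move=> P Q Q' hQ ihQ ht b hb.
  case: (tr_inv hb) => [[-> a]|[[L [_ e _]]|[b1 [b2 [A [B [eb e tA tB hb12]]]]]]] //.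
    exact: TInv_copy a ht.
  case: e => eA eB; subst A B b.
  have [HB [YB [hB yB eB]]] := ihQ hQ _ tB.
  have [HA [hA eA]] := tr_collapse tA.
  have [H [hH eH]] := Hb_combine hA hB hb12.
  exists H, YB; split=> //.
  apply: s_trans; first by apply: s_par; [exact: eA|exact: eB].
  apply: s_trans; first by apply: s_parA.
  by apply: s_par; [exact: eH|exact: s_refl].
-
  move=> P Q ns p P' hP ihP hd ht b hb.
  case: (tr_inv hb) => [[-> a]|[[L [_ e _]]|[b1 [b2 [A [B [eb e tA tB hb12]]]]]]] //.
    exact: TInv_copy a ht.
  case: e => eA eB; subst A B b.
  have [LA [LA' [aA tA' FA]]] := ihP hP _ tA.
  exists LA, LA'; split=> // s hs X hX hsf.
  have [XA [XB [eX [hXA hXB]]]] := alpha_ParE hX (erefl _); subst X.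
  move: hsf; rewrite safe_Par => /andP[sA sB].
  have [X1 [HA [x1 sx1 hA eA]]] := FA s hs XA hXA sA.
  have [HB [hB eB]] := tr_collapse (tr_alpha tB hXB).
  have [H [hH eH]] := Hb_combine hA hB hb12.
  exists X1, H; split=> //=.
  rewrite (@psubst_id s XB); last first.
    move=> z; rewrite -(alpha_fn hXB) => hz; apply/negP => /hs hzb.
    by move: hd; rewrite disj_cat => /andP[_ /allP /(_ z hzb)]; rewrite hz.
  apply: s_trans; first by apply: s_par; [exact: eA|exact: eB].
  apply: s_trans; first by apply: sc_pAC.
  by apply: s_par; [exact: eH|exact: s_refl].
-
  move=> P Q ns p Q' hQ ihQ hd ht b hb.
  case: (tr_inv hb) => [[-> a]|[[L [_ e _]]|[b1 [b2 [A [B [eb e tA tB hb12]]]]]]] //.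
    exact: TInv_copy a ht.
  case: e => eA eB; subst A B b.
  have [LB [LB' [aB tB' FB]]] := ihQ hQ _ tB.
  exists LB, LB'; split=> // s hs X hX hsf.
  have [XA [XB [eX [hXA hXB]]]] := alpha_ParE hX (erefl _); subst X.
  move: hsf; rewrite safe_Par => /andP[sA sB].
  have [X1 [HB [x1 sx1 hB eB]]] := FB s hs XB hXB sB.
  have [HA [hA eA]] := tr_collapse (tr_alpha tA hXA).
  have [H [hH eH]] := Hb_combine hA hB hb12.
  exists X1, H; split=> //=.
  rewrite (@psubst_id s XA); last first.
    move=> z; rewrite -(alpha_fn hXA) => hz; apply/negP => /hs hzb.
    by move: hd; rewrite disj_cat => /andP[_ /allP /(_ z hzb)]; rewrite hz.
  apply: s_trans; first by apply: s_par; [exact: eA|exact: eB].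
  apply: s_trans; first by apply: s_parA.
  by apply: s_par; [exact: eH|exact: s_refl].
-
  move=> P mu0 P' h ih ht b hb.
  case: (tr_inv hb) => [[-> a]|[[L [eb e a]]|[b1 [b2 [A [B [_ e _ _ _]]]]]]] //.
    exact: TInv_copy a ht.
  case: e => eL; subst L b.
  apply: ih h true _.
  have -> : true = true || false by [].
  by apply: tr_par; [exact: tr_rep a|exact: tr_copy a|by []].
Qed.

Definition Mb P B := forall R, erase R = erase P -> forall mu R', trans R mu R' -> INV B mu R'.

Lemma psize_alpha_erase R P : erase R = erase P -> psize R = psize P.
Proof. by move=> e; rewrite -psize_erase e psize_erase. Qed.

Lemma Mb_Nil : Mb Defs.Nil 0.
Proof.
move=> R hR mu R' h; elim: h hR => //.
by move=> P P0 mu0 P1 P2 a _ ih a2 e; apply: INV_alpha (ih _) a2; rewrite -(alpha_erase a).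
Qed.

Lemma Mb_Case p P0 : Mb (Case p P0) (psize P0).
Proof.
move=> R hR mu R' h; elim: h hR => //.
- by move=> P P00 mu0 P1 P2 a _ ih a2 e; apply: INV_alpha (ih _) a2; rewrite -(alpha_erase a).
- move=> q A [_ eA] s _ X hX _; exists (psubst s X); split; first exact: s_refl.
  by apply: leq_trans (psize_psubst s X) _; rewrite -(alpha_psize hX) (psize_alpha_erase eA).
Qed.

Lemma Mb_Res n P0 B0 : Mb P0 B0 -> Mb (Res n P0) B0.+1.
Proof.
move=> M R hR mu R' h; elim: h hR => //.
- by move=> P P00 mu0 P1 P2 a _ ih a2 e; apply: INV_alpha (ih _) a2; rewrite -(alpha_erase a).
- move=> m A [|ns p] A' h _ _ [eA]; have := M _ eA _ _ h => /=.
    by move=> [Q [h1 h2]]; exists (Res m Q); split; [apply: s_res|rewrite /=; lia].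
  exact: INVo_Res.
- move=> m A ns p A' h _ _ _ _ _ [eA]; have := M _ eA _ _ h => /=.
  by apply: INVo_mono.
Qed.

Lemma Mb_Par P0 P1 B0 B1 : Mb P0 B0 -> Mb P1 B1 ->
  Mb (Par P0 P1) ((B0 + B1 + psize P0 + psize P1 + nres P0 + nres P1).+1
                  + B0 * maxn 1 (maxpat P1) + B1 * maxn 1 (maxpat P0)).
Proof.
move=> M0 M1 R hR mu R' h; elim: h hR => //.
- by move=> P P00 mu0 P1' P2 a _ ih a2 e; apply: INV_alpha (ih _) a2; rewrite -(alpha_erase a).
- move=> A B ms ns p q A' B' s r hA _ hB _ hu d1 d2 d3 sf1 sf2 [eA eB] /=.
  have [ks kr vs vr] := unify_spec hu.
  have hks : {subset map fst s <= bn p} by rewrite ks.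
  have hkr : {subset map fst r <= bn q} by rewrite kr.
  have [QA [qA1 qA2]] := M0 _ eA _ _ hA s hks A' (a_refl _) sf1.
  have [QB [qB1 qB2]] := M1 _ eB _ _ hB r hkr B' (a_refl _) sf2.
  exists (res_seq (ms ++ ns) (Par QA QB)); split.
    by apply: scong_res_seq; apply: s_par.
  have [lA1 lA2] := trans_lab_size hA; have [lB1 lB2] := trans_lab_size hB.
  move: lA1 lA2 lB1 lB2; rewrite -(maxpat_erase A) -(nres_erase A) -(maxpat_erase B)
    -(nres_erase B) eA eB !maxpat_erase !nres_erase => lA1 lA2 lB1 lB2.
  have cs := csub_valsOK vs; have cr := csub_valsOK vr.
  rewrite psize_res_seq size_cat /=.
  have e1 : maxn 1 (size_pat q) <= maxn 1 (maxpat P1) by rewrite geq_max !leq_max leqnn lB1 orbT.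
  have e2 : maxn 1 (size_pat p) <= maxn 1 (maxpat P0) by rewrite geq_max !leq_max leqnn lA1 orbT.
  have f1 : B0 * csub s <= B0 * maxn 1 (maxpat P1) by rewrite leq_mul2l (leq_trans cs e1) orbT.
  have f2 : B1 * csub r <= B1 * maxn 1 (maxpat P0) by rewrite leq_mul2l (leq_trans cr e2) orbT.
  lia.
- move=> A B A' hA _ [eA eB] /=; have [Q [h1 h2]] := M0 _ eA _ _ hA.
  exists (Par Q B); split; first by apply: s_par; [exact: h1|exact: s_refl].
  rewrite /= (psize_alpha_erase eB); lia.
- move=> A B B' hB _ [eA eB] /=; have [Q [h1 h2]] := M1 _ eB _ _ hB.
  exists (Par A Q); split; first by apply: s_par; [exact: s_refl|exact: h1].
  rewrite /= (psize_alpha_erase eA); lia.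
- move=> A B ns p A' hA _ hd [eA eB] s hs X hX hsf.
  have [XA [XB [eX [hXA hXB]]]] := alpha_ParE hX (erefl _); subst X.
  move: hsf; rewrite safe_Par => /andP[sA sB].
  have [Q [h1 h2]] := M0 _ eA _ _ hA s hs XA hXA sA.
  exists (Par Q XB); split => /=.
    rewrite (@psubst_id s XB); first by apply: s_par; [exact: h1|exact: s_refl].
    move=> z; rewrite -(alpha_fn hXB) => hz; apply/negP => /hs hzb.
    by move: hd; rewrite disj_cat => /andP[_ /allP /(_ z hzb)]; rewrite hz.
  rewrite -(alpha_psize hXB) (psize_alpha_erase eB); have := csub_ge1 s; nia.
- move=> A B ns p B' hB _ hd [eA eB] s hs X hX hsf.
  have [XA [XB [eX [hXA hXB]]]] := alpha_ParE hX (erefl _); subst X.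
  move: hsf; rewrite safe_Par => /andP[sA sB].
  have [Q [h1 h2]] := M1 _ eB _ _ hB s hs XB hXB sB.
  exists (Par XA Q); split => /=.
    rewrite (@psubst_id s XA); first by apply: s_par; [exact: s_refl|exact: h1].
    move=> z; rewrite -(alpha_fn hXA) => hz; apply/negP => /hs hzb.
    by move: hd; rewrite disj_cat => /andP[_ /allP /(_ z hzb)]; rewrite hz.
  rewrite -(alpha_psize hXA) (psize_alpha_erase eA); have := csub_ge1 s; nia.
Qed.

Lemma Mb_Rep P0 B0 B2 : Mb P0 B0 -> Mb (Par P0 P0) B2 -> Mb (Rep P0) (B0 + B2 + psize P0).+2.
Proof.
move=> M0 M2 R hR mu R' h.
case: R hR h => //= A [eA] h.
have := tree_main h h (tr_rep (a_refl A)); case: mu h => [|ms p] h /=.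
- move=> [H [Y [hH [R0 [eR0 hR0]]] eY]]; rewrite /Hb /= in hH; subst H.
  have [QY [q1 q2]] : exists Q, scong Y Q /\ psize Q <= B0 + B2.
    case: eR0 => e.
      have [Q [q1 q2]] := M0 _ (etrans e eA) _ _ hR0; exists Q; split=> //; lia.
    have e' : erase R0 = erase (Par P0 P0) by rewrite e /= eA.
    have [Q [q1 q2]] := M2 _ e' _ _ hR0; exists Q; split=> //; lia.
  exists (Par (Rep A) QY); split.
    by apply: s_trans eY _; apply: s_par; [apply: s_refl|].
  rewrite /= (psize_alpha_erase eA); lia.
- move=> [L [L' [aL tL F]]] s hs X hX hsf.
  have [X1 [H [x1 sx1 hH eX]]] := F s hs X hX hsf; rewrite /Hb /= in hH; subst H.
  have eL : erase L = erase P0 by rewrite -(alpha_erase aL).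
  have [Q [q1 q2]] := M0 _ eL _ _ tL s hs X1 x1 sx1.
  exists (Par (Rep A) Q); split.
    by apply: s_trans eX _; apply: s_par; [apply: s_refl|].
  rewrite /= (psize_alpha_erase eA); have := csub_ge1 s; nia.
Qed.

Lemma Mb_all P : exists B, Mb P B.
Proof.
elim: P => [|a iha b ihb|a iha|n a iha|p a _].
- by exists 0; apply: Mb_Nil.
- case: iha => Ba Ma. case: ihb => Bb Mb'. eexists. exact: (Mb_Par Ma Mb').
- case: iha => Ba Ma.
  have [B2 M2] : exists B, Mb (Par a a) B by eexists; exact: (Mb_Par Ma Ma).
  eexists; exact: (Mb_Rep Ma M2).
- case: iha => Ba Ma; eexists; exact: (@Mb_Res n _ _ Ma).
- by eexists; apply: Mb_Case.
Qed.

Definition lab_fn (R : proc) (mu : label) : Prop :=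
  match mu with Tau => True | Out ns p => {subset fnp p <= fn R ++ ns} end.

Lemma mem_fnp_pnames z p : z \in fnp p -> z \in pnames p.
Proof. by move=> hz; rewrite /pnames mem_cat hz orbT. Qed.

Lemma trans_lab_fn R mu R' : trans R mu R' -> lab_fn R mu.
Proof.
elim=> //=.
- move=> P P0 [|ns p] P1 P2 a _ ih _ //= z /ih; by rewrite !mem_cat (alpha_fn a).
- by move=> p P z hz; rewrite cats0 mem_cat hz.
- move=> n P [|ns p] P' _ ih hn //= z hz; have := ih z hz; rewrite !mem_cat => /orP[hP|->]; last by rewrite orbT.
  rewrite mem_filter hP andbT; apply/orP; left; apply: contraNneq hn => <-.
  by rewrite /label_names mem_cat mem_fnp_pnames ?orbT.
- move=> m P ns p P' _ ih hm _ _ _ z hz; have := ih z hz; rewrite !mem_cat => /orP[hP|hn].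
    case: (eqVneq z m) => [->|hzm]; first by rewrite mem_rcons in_cons eqxx orbT.
    by rewrite mem_filter hzm hP.
  by rewrite mem_rcons in_cons hn !orbT.
- move=> P Q ns p P' _ ih _ z /ih; rewrite !mem_cat.
  by case: (z \in fn P) (z \in fn Q) (z \in ns) => [] [] [].
- move=> P Q ns p Q' _ ih _ z /ih; rewrite !mem_cat.
  by case: (z \in fn P) (z \in fn Q) (z \in ns) => [] [] [].
- move=> P [|ns p] P' _ ih //= z /ih; by rewrite /= !mem_cat orbb.
Qed.

Lemma fnp_protect t : fnp (protect t) =i fnp t.
Proof.
rewrite /fnp; elim: t => [x|x|x|a iha b ihb] z /=; rewrite ?mem_cat ?orbF ?in_nil //=.
have e : forall a1 b1 c1 d1 : bool, [|| a1 || b1, c1 | d1] = (a1 || c1) || (b1 || d1).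
  by case; case; case; case.
by rewrite (e (z \in vn (protect a))) (e (z \in vn a)); move: (iha z) (ihb z); rewrite !mem_cat => -> ->.
Qed.

Lemma bn_subst s p : {subset bn p <= bn (subst_pat s p)}.
Proof.
elim: p => [x|x|x|a iha b ihb] z //=; rewrite !mem_cat => /orP[/iha|/ihb] ->; by rewrite ?orbT.
Qed.

Lemma subst_pat_fn s p z : z \in fnp (subst_pat s p) ->
  (z \in fnp p /\ z \notin map fst s) \/ (exists2 e, e \in s & z \in fnp e.2).
Proof.
elim: p => [x|x|x|a iha b ihb] /=.
- by [].
- case e: lookup => [t|].
    by move=> hz; right; exists (x, t) => //; apply: lookup_In.
  rewrite /fnp /= mem_seq1 => /eqP ->; left; split=> //.
  exact/lookup_None.
- case e: lookup => [t|].
    by rewrite fnp_protect => hz; right; exists (x, t) => //; apply: lookup_In.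
  rewrite /fnp /= !inE => /eqP ->; left; split=> //.
  exact/lookup_None.
- rewrite mem_fnp_comp => /orP[/iha|/ihb] [[h1 h2]|h]; try by right.
    by left; rewrite mem_fnp_comp h1.
  by left; rewrite mem_fnp_comp h1 orbT.
Qed.

Lemma keys_remove s xs z : z \notin xs -> z \notin map fst s ->
  z \notin map fst (remove_dom s xs).
Proof.
move=> h1 h2; apply/negP => /mapP[e]; rewrite mem_filter => /andP[_ he] ez.
by move: h2; rewrite ez map_f.
Qed.

Lemma psubst_fn s P z : z \in fn (psubst s P) ->
  (z \in fn P /\ z \notin map fst s) \/ (exists2 e, e \in s & z \in fnp e.2).
Proof.
elim: P s => [|a iha b ihb|a iha|n a iha|p a iha] s /=.
- by [].
- rewrite mem_cat => /orP[/iha|/ihb] [[h1 h2]|h]; try by right.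
    by left; rewrite mem_cat h1.
  by left; rewrite mem_cat h1 orbT.
- by move/iha.
- rewrite mem_filter => /andP[hzn /iha] [[h1 h2]|[e he hz]].
    left; rewrite mem_filter hzn h1; split=> //.
    apply/negP => /mapP[e he ez]; move/negP: h2; apply; apply/mapP; exists e => //.
    by rewrite mem_filter he andbT -ez mem_seq1.
  by right; exists e => //; move: he; rewrite mem_filter => /andP[].
- rewrite mem_cat => /orP[/subst_pat_fn [[h1 h2]|h]|]; try by right.
    by left; rewrite mem_cat h1.
  rewrite mem_filter => /andP[hzb /iha] [[h1 h2]|[e he hz]].
    have hzb' : z \notin bn p by apply: contra hzb; apply: bn_subst.
    left; rewrite mem_cat mem_filter hzb' h1 orbT; split=> //.
    apply/negP => /mapP[e he ez]; move/negP: h2; apply; apply/mapP; exists e => //.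
    by rewrite mem_filter he andbT -ez.
  by right; exists e => //; move: he; rewrite mem_filter => /andP[].
Qed.

Lemma sub_cat3a (a b c : seq name) z : z \in a ++ c -> z \in (a ++ b) ++ c.
Proof. by rewrite !mem_cat => /orP[->|->]; rewrite ?orbT. Qed.
Lemma sub_cat3b (a b c : seq name) z : z \in b ++ c -> z \in (a ++ b) ++ c.
Proof. by rewrite !mem_cat => /orP[->|->]; rewrite ?orbT. Qed.

Lemma trans_target_fn R mu R' : trans R mu R' -> {subset fn R' <= fn R ++ label_names mu}.
Proof.
elim=> /=.
- move=> P P0 mu0 P1 P2 a1 _ ih a2 z; rewrite -(alpha_fn a2) => /ih.
  by rewrite !mem_cat (alpha_fn a1).
- move=> p P z hz; rewrite /label_names /pnames !mem_cat mem_filter hz andbT.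
  by case: (z \in bn p); rewrite ?orbT.
- move=> n P mu0 P' hP ih hn z; rewrite mem_filter => /andP[hzn /ih].
  by rewrite !mem_cat mem_filter hzn => /orP[->|->]; rewrite ?orbT.
- move=> m P ns p P' hP ih _ _ _ _ z /ih; rewrite /label_names !mem_cat => /orP[hz|].
    case: (eqVneq z m) => [->|hzm]; first by rewrite mem_rcons in_cons eqxx orbT.
    by rewrite mem_filter hzm hz.
  by rewrite mem_rcons in_cons => /orP[->|->]; rewrite !orbT.
- move=> P Q ms ns p q P' Q' s r hP ihP hQ ihQ hu d1 d2 d3 _ _ z.
  have [ks kr vs vr] := unify_spec hu.
  have lP := trans_lab_fn hP; have lQ := trans_lab_fn hQ; rewrite /= in lP lQ.
  rewrite fn_res_seq mem_cat negb_or => /andP[/andP[zms zns]].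
  rewrite cats0 => hz0; rewrite mem_cat; move: hz0; rewrite mem_cat.
  have hks : forall z, z \in bn p -> z \in map fst s by move=> z0; rewrite ks.
  have hkr : forall z, z \in bn q -> z \in map fst r by move=> z0; rewrite kr.
  case/orP=> /psubst_fn [[h1 h2]|[e he hz]].
  + have := ihP z h1; rewrite /label_names /pnames mem_cat => /orP[->//|].
    rewrite mem_cat (negbTE zms) /= mem_cat => /orP[/hks hb|hf]; first by rewrite hb in h2.
    by have := lP z hf; rewrite mem_cat (negbTE zms) orbF => ->.
  + have [_ /(_ z hz) hf] := vs e he.
    by have := lQ z hf; rewrite mem_cat (negbTE zns) orbF => ->; rewrite orbT.
  + have := ihQ z h1; rewrite /label_names /pnames mem_cat => /orP[->|]; first by rewrite orbT.
    rewrite mem_cat (negbTE zns) /= mem_cat => /orP[/hkr hb|hf]; first by rewrite hb in h2.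
    by have := lQ z hf; rewrite mem_cat (negbTE zns) orbF => ->; rewrite orbT.
  + have [_ /(_ z hz) hf] := vr e he.
    by have := lP z hf; rewrite mem_cat (negbTE zms) orbF => ->.
- move=> P Q P' hP ih z; rewrite !mem_cat => /orP[/ih|->]; last by rewrite orbT.
  by rewrite cats0 => ->.
- move=> P Q Q' hQ ih z; rewrite !mem_cat => /orP[->//|/ih].
  by rewrite cats0 => ->; rewrite orbT.
- move=> P Q ns p P' hP ih _ z; rewrite mem_cat => /orP[/ih|hz]; first exact: sub_cat3a.
  by rewrite !mem_cat hz orbT.
- move=> P Q ns p Q' hQ ih _ z; rewrite mem_cat => /orP[hz|/ih]; last exact: sub_cat3b.
  by rewrite !mem_cat hz.
- move=> P mu0 P' hP ih z /ih; by rewrite /= !mem_cat orbb.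
Qed.

Fixpoint proc_eqb (P Q : proc) : bool :=
  match P, Q with
  | Defs.Nil, Defs.Nil => true
  | Par a b, Par c d => proc_eqb a c && proc_eqb b d
  | Rep a, Rep c => proc_eqb a c
  | Res x a, Res y c => (x == y) && proc_eqb a c
  | Case p a, Case q c => (p == q) && proc_eqb a c
  | _, _ => false end.
Lemma proc_eqP : Equality.axiom proc_eqb.
Proof.
move=> P Q; apply: (iffP idP).
  elim: P Q => [|a iha b ihb|a iha|x a iha|p a iha] [|c d|c|y c|q c] //=.
  - by case/andP => /iha -> /ihb ->.
  - by move/iha ->.
  - by case/andP => /eqP -> /iha ->.
  - by case/andP => /eqP -> /iha ->.
move=> ->; elim: Q => [|a iha b ihb|a iha|x a iha|p a iha] //=; by rewrite ?iha ?ihb ?eqxx.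
Qed.
HB.instance Definition _ := hasDecEq.Build proc proc_eqP.

Fixpoint pat_lt k p := match p with
  | PBind x | PVar x | PProt x => x < k
  | PComp a b => pat_lt k a && pat_lt k b end.
Fixpoint proc_lt k P := match P with
  | Defs.Nil => true | Par a b => proc_lt k a && proc_lt k b | Rep a => proc_lt k a
  | Res x a => (x < k) && proc_lt k a | Case p a => pat_lt k p && proc_lt k a end.

Lemma pat_lt_mono k k' p : k <= k' -> pat_lt k p -> pat_lt k' p.
Proof.
move=> h; elim: p => [x|x|x|a iha b ihb] /=; try by move=> hx; apply: leq_trans h.
by case/andP => /iha -> /ihb ->.
Qed.
Lemma proc_lt_mono k k' P : k <= k' -> proc_lt k P -> proc_lt k' P.
Proof.
move=> h; elim: P => [|a iha b ihb|a iha|x a iha|p a iha] //=.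
- by case/andP => /iha -> /ihb ->.
- by case/andP => hx /iha ->; rewrite (leq_trans hx h).
- by case/andP => /(pat_lt_mono h) -> /iha ->.
Qed.

Lemma pnames_comp z a b : (z \in pnames (PComp a b)) = (z \in pnames a) || (z \in pnames b).
Proof.
rewrite /pnames /fnp /= !mem_cat.
by case: (z \in bn a); case: (z \in bn b); case: (z \in vn a); case: (z \in vn b);
  case: (z \in pn a); case: (z \in pn b).
Qed.
Lemma pat_lt_names k p : {in pnames p, forall z, z < k} -> pat_lt k p.
Proof.
elim: p => [x|x|x|a iha b ihb] /= h; try by apply: h; rewrite /pnames /fnp /= inE.
by rewrite iha ?ihb // => z hz; apply: h; rewrite pnames_comp hz ?orbT.
Qed.

Lemma size_bn p : size (bn p) <= size_pat p.
Proof. by elim: p => //= a iha b ihb; rewrite size_cat; lia. Qed.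

Lemma count_swap (a : pred name) x y l : a x -> ~~ a y -> y \notin l ->
  count a (map (sw x y) l) + count (pred1 x) l = count a l.
Proof.
move=> ax ay; elim: l => //= z l ih; rewrite in_cons negb_or => /andP[hyz hy].
rewrite -ih //; case: (eqVneq z x) => [->|hzx].
  by rewrite swapl (negbTE ay) ax /=; lia.
rewrite swap_other //; last by rewrite eq_sym.
by rewrite /=; lia.
Qed.

Lemma case_canon n M p A :
  count (fun z => M + size_pat p <= z) (bn p) <= n -> {in fn (Case p A), forall z, z < M} ->
  exists p' A', [/\ alpha (Case p A) (Case p' A'), size_pat p' = size_pat p,
                   psize A' = psize A & all (fun z => z < M + size_pat p) (bn p')].
Proof.
elim: n p A => [|n ih] p A hc hf.
  exists p, A; split => //; first exact: a_refl.
  apply/allP => z hz; rewrite ltnNge; apply/negP => hz'.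
  have : 0 < count (fun z => M + size_pat p <= z) (bn p).
    by rewrite -has_count; apply/hasP; exists z.
  lia.
case: (boolP (has (fun z => M + size_pat p <= z) (bn p))) => [/hasP[x hx hxM]|hn]; last first.
  exists p, A; split => //; first exact: a_refl.
  by apply/allP => z hz; rewrite ltnNge; apply/negP => hz'; move/hasP: hn; apply; exists z.
have [k hk] : exists k, size_pat p = k by eexists.
rewrite hk in hc hxM.
have [y hyi hyb] : exists2 y, y \in iota M k & y \notin bn p.
  case: (boolP (all (fun y => y \in bn p) (iota M k))) => [hall|]; last first.
    by case/allPn => y hy hyn; exists y.
  have hu : uniq (x :: iota M k) by rewrite /= iota_uniq mem_iota negb_and -leqNgt hxM orbT.
  have hsub : {subset x :: iota M k <= bn p}.
    by move=> z; rewrite in_cons => /orP[/eqP ->//|/(allP hall)].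
  have := uniq_leq_size hu hsub; have := size_bn p; rewrite /= size_iota hk; move=> h1 h2; have := leq_trans h2 h1; by rewrite ltnn.
move: hyi; rewrite mem_iota => /andP[hMy hyk].
have hxf : x \notin fnp p.
  apply/negP => hxf; have := hf x; rewrite /= mem_cat hxf => /(_ isT); lia.
have hyf : y \notin fn (Case p A) by apply/negP => /hf; lia.
have a1 := a_case_ren hx hxf hyf.
have hc1 : count (fun z => M + size_pat (swap_pat x y p) <= z) (bn (swap_pat x y p)) <= n.
  rewrite size_pat_swap bn_swap hk.
  have hay : ~~ (M + k <= y) by rewrite -ltnNge.
  have := count_swap (a := fun z => M + k <= z) (l := bn p) hxM hay hyb.
  have : 0 < count (pred1 x) (bn p) by rewrite -has_count; apply/hasP; exists x => //=.
  move=> h1 h2; rewrite -ltnS; apply: leq_trans hc; rewrite -h2 -addn1 leq_add2l. exact: h1.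
have hf1 : {in fn (Case (swap_pat x y p) (swap_proc x y A)), forall z, z < M}.
  by move=> z; rewrite -(alpha_fn a1); apply: hf.
have [p' [A' [a2 s1 s2 hall]]] := ih _ _ hc1 hf1.
exists p', A'; split.
- exact: a_trans a1 a2.
- by rewrite s1 size_pat_swap.
- by rewrite s2 psize_swap.
- by move: hall; rewrite size_pat_swap.
Qed.

Lemma psize_gt0 P : 0 < psize P. Proof. by case: P. Qed.

Lemma canon n Q M : psize Q <= n -> {in fn Q, forall z, z < M} ->
  exists Q', alpha Q Q' /\ proc_lt (M + psize Q) Q'.
Proof.
elim: n Q M => [|n ih] Q M hs hf; first by have := psize_gt0 Q; lia.
case: Q hs hf => [|A B|A|x A|p A] /= hs hf.
- by exists Defs.Nil; split=> //; apply: a_refl.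
- have [A' [a1 l1]] := ih A M (ltac:(lia)) (fun z hz => hf z ltac:(by rewrite mem_cat hz)).
  have [B' [a2 l2]] := ih B M (ltac:(lia)) (fun z hz => hf z ltac:(by rewrite mem_cat hz orbT)).
  exists (Par A' B'); split; first exact: a_par.
  by rewrite /= (proc_lt_mono _ l1) ?(proc_lt_mono _ l2) //; lia.
- have [A' [a1 l1]] := ih A M (ltac:(lia)) hf.
  exists (Rep A'); split; first exact: a_rep.
  by rewrite /= (proc_lt_mono _ l1) //; lia.
- have hM : M \notin fn (Res x A) by apply/negP => /hf; lia.
  have a1 := a_res_ren hM.
  have hf1 : {in fn (swap_proc x M A), forall z, z < M + 1}.
    move=> z; rewrite fn_swap => /mapP[w hw ->].
    case: (eqVneq w x) => [->|hwx]; first by rewrite swapl; lia.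
    have hwM : w < M by apply: hf; rewrite /= mem_filter hwx hw.
    rewrite swap_other //; [lia|by rewrite neq_ltn hwM].
  have [A' [a2 l2]] := ih (swap_proc x M A) (M + 1) ltac:(rewrite psize_swap; lia) hf1.
  exists (Res M A'); split; first by apply: a_trans a1 _; apply: a_res.
  rewrite /= (proc_lt_mono _ l2) ?andbT; [lia|by rewrite psize_swap; lia].
- have [p' [A' [a1 s1 s2 hall]]] := case_canon (leqnn _) hf.
  have hf1 : {in fn A', forall z, z < M + size_pat p}.
    move=> z hz; case: (boolP (z \in bn p')) => [/(allP hall)//|hzb].
    have : z \in fn (Case p' A') by rewrite /= mem_cat mem_filter hzb hz orbT.
    by rewrite -(alpha_fn a1) => /hf; lia.
  have [A'' [a2 l2]] := ih A' (M + size_pat p) ltac:(rewrite s2; lia) hf1.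
  exists (Case p' A''); split; first by apply: a_trans a1 _; apply: a_case.
  rewrite /= (proc_lt_mono _ l2) ?andbT; last by rewrite s2; lia.
  apply: pat_lt_names => z; rewrite /pnames mem_cat => /orP[/(allP hall)|hz]; first lia.
  have : z \in fn (Case p' A') by rewrite /= mem_cat hz.
  by rewrite -(alpha_fn a1) => /hf; lia.
Qed.

Fixpoint enum_pat n k : seq pat :=
  if n is n'.+1 then
    [seq PBind i | i <- iota 0 k] ++ [seq PVar i | i <- iota 0 k] ++
    [seq PProt i | i <- iota 0 k] ++
    [seq PComp a b | a <- enum_pat n' k, b <- enum_pat n' k]
  else [::].

Lemma enum_pat_complete n k p : size_pat p <= n -> pat_lt k p -> p \in enum_pat n k.
Proof.
elim: n p => [|n ih] [x|x|x|a b] //= hs hl; rewrite !mem_cat.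
- by rewrite map_f // mem_iota.
- by rewrite map_f ?orbT // mem_iota.
- by rewrite map_f ?orbT // mem_iota.
- case/andP: hl => ha hb.
  by rewrite allpairs_f ?orbT //; apply: ih => //; lia.
Qed.

Fixpoint enum_proc n k : seq proc :=
  if n is n'.+1 then
    Defs.Nil :: [seq Par a b | a <- enum_proc n' k, b <- enum_proc n' k] ++
    [seq Rep a | a <- enum_proc n' k] ++
    [seq Res x a | x <- iota 0 k, a <- enum_proc n' k] ++
    [seq Case p a | p <- enum_pat n' k, a <- enum_proc n' k]
  else [::].

Lemma enum_proc_complete n k P : psize P <= n -> proc_lt k P -> P \in enum_proc n k.
Proof.
elim: n P => [|n ih] [|a b|a|x a|p a] //= hs hl; rewrite in_cons !mem_cat.
- case/andP: hl => ha hb.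
  by rewrite allpairs_f ?orbT //; apply: ih => //; lia.
- by rewrite map_f ?orbT //; apply: ih => //; lia.
- case/andP: hl => hx ha.
  by rewrite allpairs_f ?orbT // ?mem_iota //; apply: ih => //; lia.
- case/andP: hl => hp ha.
  rewrite allpairs_f ?orbT //; first by apply: enum_pat_complete => //; lia.
  by apply: ih => //; lia.
Qed.

Lemma mem_In (T : eqType) (x : T) s : x \in s -> List.In x s.
Proof. by elim: s => //= y s ih; rewrite in_cons => /orP[/eqP ->|/ih]; auto. Qed.

Lemma INV_final B mu P' : INV B mu P' -> exists Q, scong P' Q /\ psize Q <= B.
Proof.
case: mu => [|ns p] //= hinv.
have hk : {subset map fst ([::] : subst) <= bn p} by [].
have := hinv [::] hk P' (a_refl _) (safe_nil _).
by rewrite psubst_nil /= muln1.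
Qed.

Theorem main_result :
  forall (P : proc) (mu : label), wf_proc P ->
  exists reps : list proc,
    forall P', trans P mu P' -> exists Q, In Q reps /\ scong P' Q.
Proof.
move=> P mu _.
have [B MB] := Mb_all P.
have [M hM] : exists M, forall z, z \in fn P ++ label_names mu -> z < M.
  elim: (fn P ++ label_names mu) => [|z l [m ih]]; first by exists 0.
  exists (maxn z.+1 m) => y; rewrite in_cons => /orP[/eqP ->|/ih h].
    by rewrite leq_max leqnn.
  by rewrite leq_max h orbT.
exists (enum_proc B (M + B)) => P' h.
have [Q [q1 q2]] := INV_final (MB P (erefl _) _ _ h).
have hfQ : {in fn Q, forall z, z < M}.
  move=> z; rewrite -(scong_fn q1) => /(trans_target_fn h); exact: hM.
have [Q' [a1 l1]] := canon (leqnn _) hfQ.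
exists Q'; split; last by apply: s_trans q1 _; apply: s_alpha.
apply: mem_In; apply: enum_proc_complete; first by rewrite -(alpha_psize a1).
by apply: proc_lt_mono l1; lia.
Qed.


Theorem proposition3p7 :
  forall (P : proc) (mu : label), wf_proc P ->
  exists reps : list proc,
    forall P', trans P mu P' -> exists Q, In Q reps /\ scong P' Q.
Proof. exact: main_result. Qed.
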